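(* Let $S$ be the Phillips symmetric operator in $\mathfrak{H}$, let $Q:\mathfrak{N}_i\to\mathfrak{N}_{-i}$ be an arbitrary unitary mapping and let $\Gamma_0,\Gamma_1$ be the associated boundary operators. Then the characteristic function $\Theta(\cdot)$ of $S$ associated with $(\mathfrak{N}_{-i},\Gamma_0,\Gamma_1)$ is identically zero: $\Theta(\mu)=0$ for all $\mu$ with $\operatorname{Im}\mu>0$.
   Context: Phillips symmetric operator: let $U$ be a unitary operator in a Hilbert space $\mathfrak{H}$ which is a bilateral shift with a finite-dimensional wandering subspace $W_0$, i.e. the subspaces $U^nW_0$, $n\in\mathbb{Z}$, are mutually orthogonal and their orthogonal sum is $\mathfrak{H}$. Let $V=U\upharpoonright(\mathfrak{H}\ominus W_0)$ and $S=i(V+I)(V-I)^{-1}$ with $\mathcal{D}(S)=\mathcal{R}(V-I)$; $S$ is a closed densely defined simple symmetric operator with deficiency indices $\langle\dim W_0,\dim W_0\rangle$. Defect subspaces: $\mathfrak{N}_\mu=\mathfrak{H}\ominus\mathcal{R}(S-\mu I)=\ker(S^*-\overline{\mu}I)$; in particular $\mathfrak{N}_{\pm i}$. Every $\psi\in\mathcal{D}(S^* )$ decomposes uniquely as $\psi=u+f_{-i}+f_i$, $u\in\mathcal{D}(S)$, $f_{\pm i}\in\mathfrak{N}_{\pm i}$; for a unitary $Q:\mathfrak{N}_i\to\mathfrak{N}_{-i}$ set $\Gamma_0\psi=f_{-i}+Qf_i$, $\Gamma_1\psi=if_{-i}-iQf_i$. The characteristic function is the operator function on $\mathfrak{N}_{-i}$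 defined for $\operatorname{Im}\mu>0$ by $\Theta(\mu)(\Gamma_1+i\Gamma_0)f=(\Gamma_1-i\Gamma_0)f$ for all $f\in\mathfrak{N}_{\overline{\mu}}$. *)

(* Defs.v *)
From mathcomp Require Import all_boot all_algebra.
From mathcomp Require Import reals.
From mathcomp.real_closed Require Export complex.
Set Implicit Arguments.
Unset Strict Implicit.
Unset Printing Implicit Defensive.
Import GRing.Theory Num.Theory.
Local Open Scope ring_scope.
Local Open Scope complex_scope.

Section Hilbert.
Variable R : realType.
Local Notation C := R[i].
Variable H : lmodType C.
(* inner product, linear in the first and conjugate-linear in the second argument *)
Variable ip : H -> H -> C.

Definition is_inner_product : Prop :=
  [/\ (forall (a : C) (x y z : H), ip (a *: x + y) z = a * ip x z + ip y z),
      (forall x y : H, ip y x = (ip x y)^*),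
      (forall x : H, 0 <= ip x x) &
      (forall x : H, ip x x = 0 -> x = 0)].

Definition hnorm (x : H) : C := sqrtC (ip x x).

Definition cauchy_seq (u : nat -> H) : Prop :=
  forall e : C, 0 < e -> exists N : nat,
    forall m n : nat, (N <= m)%N -> (N <= n)%N -> hnorm (u m - u n) < e.

Definition converges_to (u : nat -> H) (l : H) : Prop :=
  forall e : C, 0 < e -> exists N : nat, forall n : nat, (N <= n)%N -> hnorm (u n - l) < e.

Definition complete_space : Prop :=
  forall u : nat -> H, cauchy_seq u -> exists l : H, converges_to u l.

Definition hilbert_space : Prop := is_inner_product /\ complete_space.

Definition orth_compl (A : H -> Prop) (x : H) : Prop := forall y, A y -> ip y x = 0.

Definition subspace (A : H -> Prop) : Prop :=
  A 0 /\ forall (a : C) (x y : H), A x -> A y -> A (a *: x + y).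

Definition finite_dim (A : H -> Prop) : Prop :=
  exists s : seq H, forall x, A x <-> exists c : 'I_(size s) -> C, x = \sum_(k < size s) c k *: s`_k.

Definition unitary (U : H -> H) : Prop :=
  [/\ (forall (a : C) (x y : H), U (a *: x + y) = a *: U x + U y),
      (forall x y : H, ip (U x) (U y) = ip x y) &
      (forall y : H, exists x, U x = y)].

(* U^n W0 for n : int (U is bijective, so U^{-k} W0 = preimage of W0 under U^k) *)
Definition shift_img (U : H -> H) (n : int) (W : H -> Prop) (x : H) : Prop :=
  match n with
  | Posz k => exists w, W w /\ x = iter k U w
  | Negz k => W (iter k.+1 U x)
  end.

Definition wandering (U : H -> H) (W : H -> Prop) : Prop :=
  forall m n : int, m <> n -> forall x y, shift_img U m W x -> shift_img U n W y -> ip x y = 0.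

(* the orthogonal sum of the U^n W is H: finite sums of elements of the U^n W are dense *)
Definition orth_sum_whole (U : H -> H) (W : H -> Prop) : Prop :=
  forall (x : H) (e : C), 0 < e -> exists s : seq (int * H),
    (forall p, p \in s -> shift_img U p.1 W p.2) /\ hnorm (x - \sum_(p <- s) p.2) < e.

Definition bilateral_shift (U : H -> H) (W0 : H -> Prop) : Prop :=
  [/\ unitary U, subspace W0, finite_dim W0, wandering U W0 & orth_sum_whole U W0].

(* Phillips operator: V = U restricted to H (-) W0, S = i (V + I)(V - I)^{-1},
   D(S) = R(V - I).  Its graph: { (Vx - x, i(Vx + x)) | x in H (-) W0 }. *)
Definition domS (U : H -> H) (W0 : H -> Prop) (u : H) : Prop :=
  exists x, orth_compl W0 x /\ u = U x - x.

Definition graphS (U : H -> H) (W0 : H -> Prop) (u v : H) : Prop :=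
  exists x, orth_compl W0 x /\ u = U x - x /\ v = 'i *: (U x + x).

(* defect subspace N_l = H (-) R(S - l I) *)
Definition defect (U : H -> H) (W0 : H -> Prop) (l : C) (f : H) : Prop :=
  forall u v, graphS U W0 u v -> ip (v - l *: u) f = 0.

Definition unitary_between (A B : H -> Prop) (Q : H -> H) : Prop :=
  [/\ (forall f, A f -> B (Q f)),
      (forall g, B g -> exists f, A f /\ Q f = g),
      (forall f g, A f -> A g -> ip (Q f) (Q g) = ip f g) &
      (forall (a : C) f g, A f -> A g -> Q (a *: f + g) = a *: Q f + Q g)].

(* psi = u + f_{-i} + f_i with u in D(S), f_{-i} in N_{-i}, f_i in N_i
   (this decomposition of psi in D(S-star) is unique), and
   g0 = Gamma0 psi = f_{-i} + Q f_i,  g1 = Gamma1 psi = i f_{-i} - i Q f_i *)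
Definition boundary_values (U : H -> H) (W0 : H -> Prop) (Q : H -> H)
    (psi g0 g1 : H) : Prop :=
  exists u fm fp,
    [/\ domS U W0 u, defect U W0 (- 'i) fm, defect U W0 'i fp &
        psi = u + fm + fp] /\
    g0 = fm + Q fp /\ g1 = 'i *: fm - 'i *: Q fp.

(* Theta satisfies the defining relation of the characteristic function at mu:
   Theta (Gamma1 + i Gamma0) f = (Gamma1 - i Gamma0) f for all f in N_{conj mu} *)
Definition char_fun_rel (U : H -> H) (W0 : H -> Prop) (Q : H -> H) (mu : C)
    (Theta : H -> H) : Prop :=
  forall f, defect U W0 mu^* f -> forall g0 g1, boundary_values U W0 Q f g0 g1 ->
    Theta (g1 + 'i *: g0) = g1 - 'i *: g0.

End Hilbert.

(* Main.v *)
Require Import Defs.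
From Stdlib Require Import ClassicalEpsilon.
From mathcomp Require Import all_boot all_order all_algebra.
From mathcomp Require Import reals.
From mathcomp.real_closed Require Import complex.
From mathcomp Require Import ring lra.
Import Order.TTheory GRing.Theory Num.Theory.
Local Open Scope ring_scope.
Local Open Scope complex_scope.

Section Basic.
Variable R : realType.
Local Notation C := R[i].
Variable H : lmodType C.
Variable ip : H -> H -> C.
Hypothesis hip : is_inner_product ip.

Lemma conjE (x : C) : Num.conj x = conjc x.
Proof. by []. Qed.

Lemma ipDl x y z : ip (x + y) z = ip x z + ip y z.
Proof. move: hip; rewrite /is_inner_product => -[h _ _ _]. have := h 1 x y z. rewrite scale1r mul1r. by []. Qed.
Lemma ip0l z : ip 0 z = 0.
Proof. have h := ipDl 0 0 z; rewrite addr0 -{1}[ip 0 z]addr0 in h. by rewrite (addrI _ h). Qed.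
Lemma ipZl a x z : ip (a *: x) z = a * ip x z.
Proof. move: hip; rewrite /is_inner_product => -[h _ _ _]. by have := h a x 0 z; rewrite addr0 ip0l addr0. Qed.
Lemma ipNl x z : ip (- x) z = - ip x z.
Proof. by rewrite -scaleN1r ipZl mulN1r. Qed.
Lemma ipBl x y z : ip (x - y) z = ip x z - ip y z.
Proof. by rewrite ipDl ipNl. Qed.
Lemma ipC x y : ip y x = (ip x y)^*.
Proof. by move: hip; rewrite /is_inner_product => -[]. Qed.
Lemma ipDr x y z : ip z (x + y) = ip z x + ip z y.
Proof. by rewrite ipC ipDl rmorphD /= -!ipC. Qed.
Lemma ipZr a x z : ip z (a *: x) = conjc a * ip z x.
Proof. by rewrite ipC ipZl rmorphM /= -ipC. Qed.
Lemma ip0r z : ip z 0 = 0.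
Proof. by rewrite ipC ip0l rmorph0 /=. Qed.
Lemma ipNr x z : ip z (- x) = - ip z x.
Proof. by rewrite ipC ipNl rmorphN /= -ipC. Qed.
Lemma ipBr x y z : ip z (x - y) = ip z x - ip z y.
Proof. by rewrite ipDr ipNr. Qed.
Lemma ip_ge0 x : 0 <= ip x x.
Proof. by move: hip; rewrite /is_inner_product => -[]. Qed.
Lemma ip_eq0 x : ip x x = 0 -> x = 0.
Proof. by move: hip; rewrite /is_inner_product => -[_ _ _]; apply. Qed.
Lemma ipJ x : conjc (ip x x) = ip x x.
Proof. by rewrite -ipC. Qed.

Lemma ip_sum (s : seq (int * H)) z :
  ip (\sum_(p <- s) p.2) z = \sum_(p <- s) ip p.2 z.
Proof.
elim: s => [|a s IH]; first by rewrite !big_nil ip0l.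
by rewrite !big_cons ipDl IH.
Qed.

Lemma CS x y : ip x y * ip y x <= ip x x * ip y y.
Proof.
have [Y0|Ynz] := eqVneq (ip y y) 0.
  by rewrite (ip_eq0 y Y0) !ip0l ip0r !mul0r mulr0.
have Ypos : 0 < ip y y by rewrite lt0r Ynz ip_ge0.
have := ip_ge0 (ip y y *: x - ip x y *: y).
rewrite ipBl !ipBr !ipZl !ipZr -!ipC.
have -> : ip y y * (ip y y * ip x x) - ip y y * (ip y x * ip x y) -
  (ip x y * (ip y y * ip y x) - ip x y * (ip y x * ip y y)) =
    ip y y * (ip x x * ip y y - ip x y * ip y x) by ring.
by rewrite pmulr_rge0 // subr_ge0.
Qed.

Definition N x := hnorm ip x.
Lemma N_ge0 x : 0 <= N x.
Proof. by rewrite /N /hnorm sqrtC_ge0 ip_ge0. Qed.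
Lemma N_sq x : N x ^+ 2 = ip x x.
Proof. by rewrite /N /hnorm sqrtCK. Qed.
Lemma N_eq0 x : N x = 0 -> x = 0.
Proof. by move=> h; apply: ip_eq0; rewrite -N_sq h expr0n. Qed.
Lemma N_uniq x r : 0 <= r -> r ^+ 2 = ip x x -> N x = r.
Proof. by move=> r0 hr; rewrite /N /hnorm -hr sqrCK. Qed.

Lemma CSn x y : `|ip x y| <= N x * N y.
Proof.
rewrite -(ler_pXn2r (n:=2)) // ?nnegrE ?mulr_ge0 ?N_ge0 //.
by rewrite exprMn !N_sq normCK conjE -ipC CS.
Qed.

Lemma N_triangle x y : N (x + y) <= N x + N y.
Proof.
rewrite -(ler_pXn2r (n:=2)) // ?nnegrE ?addr_ge0 ?N_ge0 //.
rewrite !N_sq sqrrD !N_sq ipDl !ipDr.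
have h : ip x y + ip y x <= (N x * N y) *+ 2.
  rewrite mulr2n (ipC y x) addrC.
  apply: le_trans (real_ler_norm _) _.
    by rewrite CrealE conjE rmorphD /= conjcK addrC.
  apply: le_trans (ler_normD _ _) _.
  by rewrite -conjE norm_conjC; apply: lerD; rewrite mulrC CSn.
by rewrite addrA -(addrA _ (ip x y)) lerD2r lerD2l.
Qed.

Lemma NZ a x : N (a *: x) = `|a| * N x.
Proof.
apply: N_uniq; first by rewrite mulr_ge0 ?N_ge0.
by rewrite exprMn N_sq normCK conjE ipZl ipZr mulrA [_ * conjc a]mulrC.
Qed.
Lemma NN x : N (- x) = N x.
Proof. by rewrite -scaleN1r NZ normrN1 mul1r. Qed.
Lemma N_sym x y : N (x - y) = N (y - x).
Proof. by rewrite -NN opprB. Qed.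


Lemma C_arch (y : C) : 0 <= y -> exists n : nat, y < n%:R.
Proof.
case: y => a b; rewrite lecE /= => /andP[/eqP b0 a0].
exists (Num.bound a).
rewrite -(rmorph_nat (real_complex R)) ltcE /= b0 eqxx /=.
exact: archi_boundP.
Qed.

Lemma small_zero (x : C) : 0 <= x -> (forall e : C, 0 < e -> x <= e) -> x = 0.
Proof.
move=> x0 h; apply/eqP; apply: contraT => xn0.
have xp : 0 < x by rewrite lt0r xn0.
have := h (x / 2%:R); rewrite divr_gt0 // => /(_ isT).
rewrite ler_pdivlMr // => hle.
have h2 : x * 1 < x * 2%:R by rewrite ltr_pM2l // ltr1n.
by have := lt_le_trans h2 hle; rewrite mulr1 ltxx.
Qed.

Lemma arch_zero (x K : C) : 0 <= x -> (forall n : nat, n%:R * x <= K) -> x = 0.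
Proof.
move=> x0 h; apply/eqP; apply: contraT => xn0.
have xp : 0 < x by rewrite lt0r xn0.
have K0 : 0 <= K by have := h 0%N; rewrite mul0r.
have [n hn] := @C_arch (K / x) (divr_ge0 K0 (ltW xp)).
have := h n; rewrite -ler_pdivlMr // => hh.
by have := lt_le_trans hn hh; rewrite ltxx.
Qed.

Lemma bernoulli (p : C) (n : nat) : 0 <= p -> 1 + n%:R * p <= (1 + p) ^+ n.
Proof.
move=> p0; elim: n => [|n IH]; first by rewrite mul0r addr0 expr0.
rewrite exprS.
apply: le_trans (_ : (1 + p) * (1 + n%:R * p) <= _); last first.
  by rewrite ler_pM2l // ltr_wpDr // ltr01.
have -> : (1 + p) * (1 + n%:R * p) = 1 + n.+1%:R * p + n%:R * p * p.
  by rewrite -addn1 natrD; ring.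
by rewrite lerDl mulr_ge0 // mulr_ge0 // ler0n.
Qed.

Lemma geo_zero (q x K : C) : 0 <= q -> q < 1 -> 0 <= x ->
  (forall n : nat, x <= q ^+ n * K) -> x = 0.
Proof.
move=> q0 q1 x0 h.
have [qz|qn0] := eqVneq q 0.
  have := h 1%N; rewrite expr1 qz mul0r => hx.
  by apply/eqP; rewrite eq_le hx x0.
have qp : 0 < q by rewrite lt0r qn0.
set p := q^-1 - 1.
have p0 : 0 < p by rewrite subr_gt0 invf_gt1.
have Hq : q * (1 + p) = 1 by rewrite /p addrC subrK mulfV.
have : x * p = 0.
  apply: (@arch_zero _ K); first by rewrite mulr_ge0 // ltW.
  move=> n.
  apply: le_trans (_ : x * (1 + p) ^+ n <= _).
    apply: le_trans (_ : x + n%:R * (x * p) <= _); first by rewrite lerDr.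
    have hb := @bernoulli p n (ltW p0).
    have -> : x + n%:R * (x * p) = x * (1 + n%:R * p) by ring.
    by rewrite ler_wpM2l.
  have p1 : 0 <= 1 + p by rewrite addr_ge0 // ltW.
  have := ler_wpM2r (exprn_ge0 n p1) (h n).
  by rewrite mulrAC -exprMn Hq expr1n mul1r.
move/eqP; rewrite mulf_eq0 => /orP[/eqP // | pz].
by move: p0; rewrite (eqP pz) ltxx.
Qed.

Lemma geo_small (q K e : C) : 0 <= q -> q < 1 -> 0 <= K -> 0 < e ->
  exists n : nat, q ^+ n * K < e.
Proof.
move=> q0 q1 K0 e0.
have [qz|qn0] := eqVneq q 0.
  by exists 1%N; rewrite expr1 qz mul0r.
have qp : 0 < q by rewrite lt0r qn0.
set p := q^-1 - 1.
have p0 : 0 < p by rewrite subr_gt0 invf_gt1.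
have Hq : q * (1 + p) = 1 by rewrite /p addrC subrK mulfV.
have ep : 0 < e * p by rewrite mulr_gt0.
have [n hn] := @C_arch (K / (e * p)) (divr_ge0 K0 (ltW ep)).
exists n.
have p1 : 0 < 1 + p by rewrite addr_gt0 // ltr01.
have qn : 0 < q ^+ n by rewrite exprn_gt0.
have -> : q ^+ n = ((1 + p) ^+ n)^-1.
  have nz : (1 + p) ^+ n != 0 by rewrite expf_neq0 // gt_eqF.
  by apply: (mulIf nz); rewrite mulVf // -exprMn Hq expr1n.
rewrite mulrC ltr_pdivrMr ?exprn_gt0 //.
apply: lt_le_trans (_ : e * (1 + n%:R * p) <= _); last first.
  by rewrite ler_pM2l // bernoulli // ltW.
rewrite ltr_pdivrMr // in hn.
rewrite mulrDr mulr1; apply: lt_le_trans hn _.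
by rewrite mulrCA lerDr ltW.
Qed.

Lemma cayley_lt (mu : C) : 0 < 'Im mu -> `|mu - 'i| < `|mu + 'i|.
Proof.
rewrite -complexIm; case: mu => a b; rewrite /= ltcR => b0.
rewrite -(@ltr_pXn2r _ 2) ?nnegrE ?normr_ge0 //.
rewrite -!add_Re2_Im2 ltcR /= subr0 addr0.
rewrite ltrD2l !sqrrD !sqrrN; lra.
Qed.


Variable U : H -> H.
Variable W0 : H -> Prop.
Hypothesis hU : unitary ip U.
Hypothesis hW : wandering ip U W0.
Hypothesis hS : orth_sum_whole ip U W0.

Lemma Ulin a x y : U (a *: x + y) = a *: U x + U y.
Proof. by move: hU; rewrite /unitary => -[h _ _]; apply: h. Qed.
Lemma U0 : U 0 = 0.
Proof.
have h := Ulin 1 0 0; rewrite addr0 !scale1r -{1}[U 0]addr0 in h.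
by symmetry; exact: addrI _ h.
Qed.
Lemma UD x y : U (x + y) = U x + U y.
Proof. by have := Ulin 1 x y; rewrite !scale1r. Qed.
Lemma UZ a x : U (a *: x) = a *: U x.
Proof. by have := Ulin a x 0; rewrite !addr0 U0 addr0. Qed.
Lemma UN x : U (- x) = - U x.
Proof. by rewrite -scaleN1r UZ scaleN1r. Qed.
Lemma UB x y : U (x - y) = U x - U y.
Proof. by rewrite UD UN. Qed.
Lemma Uiso x y : ip (U x) (U y) = ip x y.
Proof. by move: hU; rewrite /unitary => -[_ h _]; apply: h. Qed.
Lemma Usurj y : exists x, U x = y.
Proof. by move: hU; rewrite /unitary => -[_ _ h]; apply: h. Qed.
Lemma NU x : N (U x) = N x.
Proof. by rewrite /N /hnorm Uiso. Qed.

Definition V (y : H) : H := proj1_sig (constructive_indefinite_description _ (Usurj y)).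
Lemma UV y : U (V y) = y.
Proof. by rewrite /V; case: constructive_indefinite_description. Qed.

Definition z k w := iter k V w.
Lemma Uz k w : U (z k.+1 w) = z k w.
Proof. by rewrite /z iterS UV. Qed.
Lemma iterUz k w : iter k U (z k w) = w.
Proof.
elim: k => [//|k IH].
by rewrite iterSr Uz.
Qed.
Lemma z_orth k {w} : W0 w -> orth_compl ip W0 (z k.+1 w).
Proof.
move=> Ww y Wy.
have := hW; rewrite /wandering => hw.
apply: (hw (Posz 0) (Negz k)) => //=.
  by exists y.
by change (W0 (iter k.+1 U (z k.+1 w))); rewrite iterUz.
Qed.
Lemma z_orth2 j k w : W0 w -> j <> k -> ip (z j.+1 w) (z k.+1 w) = 0.
Proof.
move=> Ww jk.
have := hW; rewrite /wandering => hw.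
apply: (hw (Negz j) (Negz k)) => /=; last 2 first.
- by change (W0 (iter j.+1 U (z j.+1 w))); rewrite iterUz.
- by change (W0 (iter k.+1 U (z k.+1 w))); rewrite iterUz.
by case=> /jk.
Qed.
Lemma z_norm k w : ip (z k w) (z k w) = ip w w.
Proof.
elim: k => [//|k IH].
by rewrite -IH -(Uz k w) Uiso.
Qed.
Lemma Nz k w : N (z k w) = N w.
Proof. by rewrite /N /hnorm z_norm. Qed.

Lemma defect_rel {l f y} : defect ip U W0 l f -> orth_compl ip W0 y ->
  ('i - l) * ip (U y) f + ('i + l) * ip y f = 0.
Proof.
move=> Hf Hy.
have := Hf (U y - y) ('i *: (U y + y)) (ex_intro _ y (conj Hy (conj erefl erefl))).
rewrite ipBl !ipZl ipDl ipBl => Hd.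
by apply: etrans Hd; ring.
Qed.

Lemma defect_of_rel l f :
  (forall y, orth_compl ip W0 y -> ('i - l) * ip (U y) f + ('i + l) * ip y f = 0) ->
  defect ip U W0 l f.
Proof.
move=> h u v [y [Hy [-> ->]]].
rewrite ipBl !ipZl ipDl ipBl -(h y Hy).
ring.
Qed.

Lemma i2_neq0 : ('i + 'i : C) != 0.
Proof.
apply/eqP => /(congr1 (@complex.Im _)) /= h.
have : (0 : R) < 1 + 1 by lra.
by rewrite h ltxx.
Qed.

Lemma defect_i {f y} : defect ip U W0 'i f -> orth_compl ip W0 y -> ip y f = 0.
Proof.
move=> Hf Hy; have := defect_rel Hf Hy.
rewrite subrr mul0r add0r => /eqP; rewrite mulf_eq0 (negbTE i2_neq0) /=.
by move/eqP.
Qed.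

Lemma defect_mi {f y} : defect ip U W0 (- 'i) f -> orth_compl ip W0 y -> ip (U y) f = 0.
Proof.
move=> Hf Hy; have := defect_rel Hf Hy.
rewrite opprK subrr mul0r addr0 => /eqP; rewrite mulf_eq0 (negbTE i2_neq0) /=.
by move/eqP.
Qed.

Lemma defect_scale l a f : defect ip U W0 l f -> defect ip U W0 l (a *: f).
Proof. by move=> Hf u v Huv; rewrite ipZr Hf // mulr0. Qed.
Lemma defect0 l : defect ip U W0 l 0.
Proof. by move=> u v _; rewrite ip0r. Qed.

Lemma conj_i : conjc ('i : C) = - 'i.
Proof. by apply/eqP; rewrite eq_complex /= oppr0 !eqxx. Qed.

Lemma conj_ipmu (mu : C) : conjc ('i + conjc mu) = mu - 'i.
Proof. by case: mu => x y; apply/eqP; rewrite eq_complex /=; apply/andP; split; apply/eqP; ring. Qed.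
Lemma conj_imu (mu : C) : conjc ('i - conjc mu) = - (mu + 'i).
Proof. by case: mu => x y; apply/eqP; rewrite eq_complex /=; apply/andP; split; apply/eqP; ring. Qed.

Lemma c_zero {mu f w} k : 0 < 'Im mu -> defect ip U W0 (conjc mu) f -> W0 w ->
  ip (z k w) f = 0.
Proof.
move=> Hmu Hf Ww.
set a := 'i - conjc mu; set b := 'i + conjc mu.
have Hb : `|b| = `|mu - 'i|.
  by rewrite -normcJ /b conj_ipmu.
have Ha : `|a| = `|mu + 'i|.
  by rewrite -normcJ /a conj_imu normrN.
have hab := @cayley_lt mu Hmu.
have a0 : 0 < `|a| by rewrite Ha; apply: le_lt_trans (normr_ge0 _) hab.
set q := `|b| / `|a|.
have q0 : 0 <= q by rewrite divr_ge0.
have q1 : q < 1 by rewrite ltr_pdivrMr // mul1r Ha Hb.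
have rec j : `|ip (z j w) f| = q * `|ip (z j.+1 w) f|.
  have := defect_rel Hf (z_orth j Ww); rewrite Uz -/a -/b => /eqP.
  rewrite addr_eq0 => /eqP h.
  have := congr1 Num.norm h; rewrite normrN !normrM => h2.
  by rewrite /q mulrAC -h2 mulrAC divff ?mul1r // gt_eqF.
have bnd n j : `|ip (z j w) f| <= q ^+ n * (N w * N f).
  elim: n j => [|n IH] j; first by rewrite expr0 mul1r -(Nz j w) CSn.
  by rewrite rec exprS -mulrA ler_wpM2l.
have := @geo_zero q _ _ q0 q1 (normr_ge0 _) (fun n => bnd n k).
by move/eqP; rewrite normr_eq0 => /eqP.
Qed.

Fixpoint ys (w : H) (n : nat) : H := if n is m.+1 then ys w m + z m.+1 w else 0.

Lemma ysS w n : ys w n.+1 = ys w n + z n.+1 w.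
Proof. by []. Qed.
Lemma ys0 w : ys w 0 = 0.
Proof. by []. Qed.

Lemma ys_z w n k : W0 w -> (n <= k)%N -> ip (ys w n) (z k.+1 w) = 0.
Proof.
move=> Ww; elim: n => [|n IH] hn; first by rewrite ys0 ip0l.
rewrite ysS ipDl IH ?(ltnW hn) // add0r z_orth2 //.
by move=> e; move: hn; rewrite e ltnn.
Qed.

Lemma ys_norm w n : W0 w -> ip (ys w n) (ys w n) = n%:R * ip w w.
Proof.
move=> Ww; elim: n => [|n IH]; first by rewrite ys0 ip0l mul0r.
rewrite ysS ipDl !ipDr IH ys_z // (ipC (ys w n)) ys_z // z_norm.
by rewrite rmorph0 /= addr0 add0r -addn1 natrD mulrDl mul1r.
Qed.

Lemma fp_orth {mu f x fm fp} : 0 < 'Im mu -> defect ip U W0 (conjc mu) f ->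
  orth_compl ip W0 x -> defect ip U W0 (- 'i) fm -> defect ip U W0 'i fp ->
  f = U x - x + fm + fp -> forall w, W0 w -> ip w fp = 0.
Proof.
move=> Hmu Hf Hx Hm Hp Ef w Ww.
have c0 k := c_zero k Hmu Hf Ww.
pose d j := ip (z j.+1 w) x.
have step j : d j.+1 = d j.
  have := c0 j.+1; rewrite Ef !ipDr ipNr.
  have e1 : ip (z j.+1 w) (U x) = d j.+1 by rewrite /d -(Uz j.+1 w) Uiso.
  have e2 : ip (z j.+1 w) fm = 0.
    by rewrite -(Uz j.+1 w); apply: defect_mi Hm (z_orth j.+1 Ww).
  have e3 : ip (z j.+1 w) fp = 0 by apply: defect_i Hp (z_orth j Ww).
  rewrite e1 e2 e3 !addr0 => /eqP; rewrite subr_eq0 => /eqP.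
  by [].
have dconst j : d j = d 0.
  by elim: j => [//|j IH]; rewrite step.
have e0 : ip w fp = - d 0.
  have := c0 0%N.
  change (ip w f = 0 -> ip w fp = - d 0).
  rewrite Ef !ipDr ipNr.
  have e1 : ip w (U x) = d 0.
    by change (ip (z 0 w) (U x) = d 0); rewrite /d -(Uz 0 w) Uiso.
  have e3 : ip w fm = 0.
    change (ip (z 0 w) fm = 0); rewrite -(Uz 0 w).
    exact: defect_mi Hm (z_orth 0 Ww).
  rewrite e1 (Hx w Ww) e3 subr0 addr0 => /eqP; rewrite addrC addr_eq0 => /eqP.
  by [].
have ysx n : ip (ys w n) x = n%:R * d 0.
  elim: n => [|n IH]; first by rewrite ys0 ip0l mul0r.
  by rewrite ysS ipDl IH -/(d n) dconst -addn1 natrD mulrDl mul1r.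
have d00 : d 0 = 0.
  set D := d 0 * conjc (d 0).
  have D0 : 0 <= D by rewrite /D -conjE -normCK exprn_ge0 ?normr_ge0.
  have : D = 0.
    apply: (@arch_zero _ (ip w w * ip x x)) => // n.
    case: n => [|n]; first by rewrite mul0r mulr_ge0 ?ip_ge0.
    have := CS (ys w n.+1) x.
    rewrite (ipC (ys w n.+1) x) ysx ys_norm // rmorphM /= conjc_nat.
    have -> : n.+1%:R * d 0 * (n.+1%:R * conjc (d 0)) = n.+1%:R * (n.+1%:R * D).
      by rewrite /D; ring.
    by rewrite -mulrA ler_pM2l ?ltr0Sn.
  by move/eqP; rewrite /D mulf_eq0 conjc_eq0 orbb => /eqP.
by rewrite e0 d00 oppr0.
Qed.

Lemma fp_zero fp : defect ip U W0 'i fp -> (forall w, W0 w -> ip w fp = 0) -> fp = 0.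
Proof.
move=> Hp Hw; apply: N_eq0; apply: (@small_zero _ (N_ge0 fp)) => e e0.
have := hS; rewrite /orth_sum_whole => hs.
have := hW; rewrite /wandering => hw.
have [s [Hs Hn]] := hs fp e e0.
set S := \sum_(p <- s) p.2 in Hn.
have HS : ip S fp = 0.
  rewrite /S ip_sum big1_seq // => -[[[|k]|k] v] /andP[_ /Hs] /= hv.
  - by case: hv => w' [Ww' ->]; apply: Hw.
  - apply: defect_i Hp _ => y Wy.
    by apply: (hw (Posz 0) (Posz k.+1)) => //=; exists y.
  - apply: defect_i Hp _ => y Wy.
    by apply: (hw (Posz 0) (Negz k)) => //=; exists y.
have key : N fp ^+ 2 <= e * N fp.
  rewrite -[N fp ^+ 2]ger0_norm ?exprn_ge0 ?N_ge0 // N_sq.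
  have -> : ip fp fp = ip (fp - S) fp by rewrite ipBl HS subr0.
  apply: le_trans (CSn _ _) _.
  by rewrite ler_wpM2r ?N_ge0 // ltW.
have [->|nz] := eqVneq (N fp) 0; first exact: ltW.
have np : 0 < N fp by rewrite lt0r nz N_ge0.
by rewrite expr2 ler_pM2r in key.
Qed.

Lemma N0 : N 0 = 0.
Proof. by apply: N_uniq; rewrite ?lexx // ip0l expr0n. Qed.

Lemma fixed_point (lam : C) (h : H) : complete_space ip -> `|lam| < 1 ->
  exists f, f = h + lam *: U f.
Proof.
move=> Hc l1.
pose T y := h + lam *: U y.
pose u n := iter n T 0.
set q := `|lam|.
have q0 : 0 <= q := normr_ge0 _.
have q1' : 0 <= 1 - q by rewrite subr_ge0 ltW.
have TB a b : T a - T b = lam *: U (a - b).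
  by rewrite /T opprD addrACA subrr add0r UB scalerBr.
have NT a b : N (T a - T b) = q * N (a - b) by rewrite TB NZ NU.
have uS n : u n.+1 = T (u n) by rewrite /u iterS.
have st n : N (u n.+1 - u n) = q ^+ n * N h.
  elim: n => [|n IH].
    by rewrite (uS 0%N) /u /= subr0 /T U0 scaler0 addr0 expr0 mul1r.
  by rewrite (uS n.+1) {2}(uS n) NT IH exprS mulrA.
have bound n k : N (u (n + k)%N - u n) * (1 - q) <= (q ^+ n - q ^+ (n + k)) * N h.
  elim: k => [|k IH]; first by rewrite addn0 !subrr N0 !mul0r.
  rewrite addnS.
  have -> : u (n + k).+1 - u n = (u (n + k).+1 - u (n + k)%N) + (u (n + k)%N - u n).
    by rewrite addrA subrK.
  apply: le_trans (ler_wpM2r q1' (N_triangle _ _)) _.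
  rewrite mulrDl st.
  apply: le_trans (lerD (lexx _) IH) _.
  rewrite exprS le_eqVlt; apply/orP; left; apply/eqP; ring.
have K0 : 0 <= N h / (1 - q) by rewrite divr_ge0 ?N_ge0.
have q1p : 0 < 1 - q by rewrite subr_gt0.
have bnd n k : N (u (n + k)%N - u n) <= q ^+ n * (N h / (1 - q)).
  rewrite mulrA ler_pdivlMr //.
  apply: le_trans (bound n k) _.
  by rewrite ler_wpM2r ?N_ge0 // gerBl exprn_ge0.
have cau : cauchy_seq ip u.
  move=> e e0.
  have [M hM] := @geo_small q _ e q0 l1 K0 e0.
  exists M => m n hm hn.
  have gen a b : (M <= a)%N -> (a <= b)%N -> N (u b - u a) < e.
    move=> ha hab; rewrite -(subnKC hab).
    apply: le_lt_trans (bnd a (b - a)%N) _.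
    apply: le_lt_trans hM.
    by rewrite ler_wpM2r // ler_wiXn2l // ltW.
  case: (leqP n m) => hnm; first exact: gen.
  by rewrite -/(N _) N_sym; apply: gen => //; rewrite ltnW.
have [l Hl] := Hc u cau.
have : N (l - T l) = 0.
  apply: (@small_zero _ (N_ge0 _)) => e e0.
  have e2 : 0 < e / 2%:R by rewrite divr_gt0 // ltr0Sn.
  have [M hM] := Hl _ e2.
  have -> : l - T l = (l - u M.+1) + (T (u M) - T l) by rewrite uS addrA subrK.
  apply: le_trans (N_triangle _ _) _.
  rewrite NT [e]splitr; apply: lerD.
    by rewrite N_sym ltW // hM.
  apply: le_trans (_ : N (u M - l) <= _).
    by rewrite ler_piMl ?N_ge0 // ltW.
  by rewrite ltW // hM.
move/N_eq0/subr0_eq => Hfix.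
by exists l.
Qed.

Lemma Q0_of Q : unitary_between ip (defect ip U W0 'i) (defect ip U W0 (- 'i)) Q ->
  Q 0 = 0.
Proof.
rewrite /unitary_between => -[_ _ _ hl].
have h := hl 1 0 0 (defect0 _) (defect0 _).
rewrite addr0 !scale1r -{1}[Q 0]addr0 in h.
by symmetry; exact: addrI _ h.
Qed.

Lemma part1 mu Q f g0 g1 : 0 < 'Im mu ->
  unitary_between ip (defect ip U W0 'i) (defect ip U W0 (- 'i)) Q ->
  defect ip U W0 (conjc mu) f -> boundary_values ip U W0 Q f g0 g1 ->
  g1 - 'i *: g0 = 0.
Proof.
move=> Hmu HQ Hf [u [fm [fp [[[x [Hx Eu]] Hm Hp Ef] [-> ->]]]]].
rewrite Eu in Ef.
have fp0 : fp = 0 := @fp_zero fp Hp (fp_orth Hmu Hf Hx Hm Hp Ef).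
rewrite fp0 (Q0_of _ HQ) scaler0 subr0 addr0.
by rewrite subrr.
Qed.

Lemma conj_mmi (mu : C) : conjc (mu - 'i) = conjc mu + 'i.
Proof. by case: mu => x y; apply/eqP; rewrite eq_complex /=; apply/andP; split; apply/eqP; ring. Qed.
Lemma conj_mpi (mu : C) : conjc (mu + 'i) = conjc mu - 'i.
Proof. by case: mu => x y; apply/eqP; rewrite eq_complex /=; apply/andP; split; apply/eqP; ring. Qed.

Lemma part2 mu Q Theta g : complete_space ip -> 0 < 'Im mu ->
  unitary_between ip (defect ip U W0 'i) (defect ip U W0 (- 'i)) Q ->
  char_fun_rel ip U W0 Q mu Theta -> defect ip U W0 (- 'i) g -> Theta g = 0.
Proof.
move=> Hc Hmu HQ HT Hg.
have hab := @cayley_lt mu Hmu.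
have mi0 : 0 < `|mu + 'i| by apply: le_lt_trans (normr_ge0 _) hab.
have mi0' : mu + 'i != 0 by rewrite -normr_gt0.
set lam := (mu - 'i) / (mu + 'i).
have l1 : `|lam| < 1 by rewrite normrM normfV ltr_pdivrMr // mul1r.
have lne1 : lam != 1 by apply: contraTneq l1 => ->; rewrite normr1 ltxx.
have l1' : 1 - lam != 0 by rewrite subr_eq0 eq_sym.
set fm := ('i + 'i)^-1 *: g.
set h := (1 - lam) *: fm.
have [f Ef] := @fixed_point lam h Hc l1.
have Hm : defect ip U W0 (- 'i) fm := @defect_scale _ _ _ Hg.
have Hh : defect ip U W0 (- 'i) h := @defect_scale _ _ _ Hm.
have cm0 : conjc mu - 'i != 0 by rewrite -conj_mpi conjc_eq0.
have Hf : defect ip U W0 (conjc mu) f.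
  apply: defect_of_rel => y Hy.
  have e1 : ip (U y) f = conjc lam * ip y f.
    by rewrite {1}Ef ipDr !ipZr Uiso (defect_mi Hg Hy) !mulr0 add0r.
  rewrite e1 mulrA -mulrDl.
  have -> : conjc lam = (conjc mu + 'i) / (conjc mu - 'i).
    by rewrite /lam rmorphM fmorphV /= conj_mmi conj_mpi.
  have -> : ('i - conjc mu) * ((conjc mu + 'i) / (conjc mu - 'i)) + ('i + conjc mu) = 0.
    by field.
  by rewrite mul0r.
have fW w : W0 w -> ip w f = 0 by move=> Ww; exact: (c_zero 0 Hmu Hf Ww).
have Hx : orth_compl ip W0 ((lam / (1 - lam)) *: f).
  by move=> w Ww; rewrite ipZr fW // mulr0.
have Hbv : boundary_values ip U W0 Q f fm ('i *: fm).
  exists (U ((lam / (1 - lam)) *: f) - (lam / (1 - lam)) *: f), fm, 0.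
  split; last by rewrite (Q0_of _ HQ) addr0 scaler0 subr0.
  split => //; first by exists ((lam / (1 - lam)) *: f).
    exact: defect0.
  rewrite addr0 UZ.
  have E2 : lam *: U f = f - h by rewrite {2}Ef [h + _]addrC addrK.
  rewrite [lam / _]mulrC -scalerA E2 scalerBr /h scalerA mulVf // scale1r.
  rewrite addrAC subrK -scalerBl.
  have -> : (1 - lam)^-1 - (1 - lam)^-1 * lam = 1 by field.
  by rewrite scale1r.
have := HT f Hf fm ('i *: fm) Hbv.
have -> : 'i *: fm + 'i *: fm = g.
  by rewrite -scalerDl /fm scalerA mulfV ?scale1r // i2_neq0.
by rewrite subrr.
Qed.


End Basic.

Theorem lemma3p1 (R : realType) (H : lmodType R[i]) (ip : H -> H -> R[i])
    (U : H -> H) (W0 : H -> Prop) (Q : H -> H) :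
  hilbert_space ip ->
  bilateral_shift ip U W0 ->
  unitary_between ip (defect ip U W0 'i) (defect ip U W0 (- 'i)) Q ->
  forall mu : R[i], 0 < 'Im mu ->
    (forall f, defect ip U W0 mu^* f ->
       forall g0 g1, boundary_values ip U W0 Q f g0 g1 -> g1 - 'i *: g0 = 0)
    /\ (forall Theta : H -> H, char_fun_rel ip U W0 Q mu Theta ->
          forall g, defect ip U W0 (- 'i) g -> Theta g = 0).
Proof.
move=> [hip hc] [hU _ _ hW hS] HQ mu Hmu; split.
  by move=> f Hf g0 g1 Hb; exact: (@part1 R H ip hip U W0 hU hW hS mu Q f g0 g1 Hmu HQ Hf Hb).
by move=> Theta HT g Hg; exact: (@part2 R H ip hip U W0 hU hW mu Q Theta g hc Hmu HQ HT Hg).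
Qed.
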